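(* Let $G$ be a finite group. If $G=H\,Z(G)$ for some subgroup $H$ of $G$, then $\mathcal{CD}(G)$ and $\mathcal{CD}(H)$ are isomorphic as lattices, and $\mathcal{CD}(G)=\{X Z(G)\mid X\in\mathcal{CD}(H)\}$.
   Context: For a finite group $G$ and $H\le G$, $m_G(H)=|H|\,|C_G(H)|$, $m^*(G)=\max\{m_G(H)\mid H\le G\}$, and the Chermak-Delgado lattice is $\mathcal{CD}(G)=\{H\le G\mid m_G(H)=m^*(G)\}$, a sublattice of the subgroup lattice of $G$. *)

(* Defs.v *)
From mathcomp Require Import all_boot all_fingroup all_solvable.
Set Implicit Arguments. Unset Strict Implicit. Unset Printing Implicit Defensive.
Local Open Scope group_scope.

Section CD.
Variable gT : finGroupType.

Definition mCD (G H : {set gT}) : nat := (#|H| * #|'C_G(H)|)%N.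

Definition mstarCD (G : {group gT}) : nat :=
  \max_(H : {group gT} | H \subset G) mCD G H.

Definition CDlat (G : {group gT}) : {set {group gT}} :=
  [set H : {group gT} | (H \subset G) && (mCD G H == mstarCD G)].
End CD.

(* Main.v *)
Require Import Defs.
From mathcomp Require Import all_boot all_fingroup all_solvable.
From mathcomp Require Import zify.
Set Implicit Arguments. Unset Strict Implicit.
Local Open Scope group_scope.

Lemma mstar_ub (gT : finGroupType) (G K : {group gT}) :
  K \subset G -> (mCD G K <= mstarCD G)%N.
Proof. by move=> sKG; rewrite /mstarCD; exact: (@leq_bigmax_cond _ (fun K : {group gT} => K \subset G) (fun K => mCD G K)). Qed.

Lemma mstar_ex (gT : finGroupType) (G : {group gT}) :
  exists2 K : {group gT}, K \subset G & mCD G K = mstarCD G.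
Proof.
rewrite /mstarCD.
have sGG : G \subset G by [].
rewrite (bigmax_eq_arg _ sGG).
case: arg_maxnP => // K sKG _; by exists K.
Qed.

Lemma mCD_join (gT : finGroupType) (L K Y : {group gT}) :
  L \subset 'C(Y) -> mCD L (K <*> Y) = (#|K <*> Y| * #|'C_L(K)|)%N.
Proof.
move=> cLY; rewrite /mCD centY setICA (setIidPl cLY) setIC //.
Qed.

Lemma card_join_lt (gT : finGroupType) (K Y : {group gT}) :
  ~~ (Y \subset K) -> (#|K| < #|K <*> Y|)%N.
Proof.
move=> nYK; apply: proper_card; rewrite properE joing_subl /=.
apply: contra nYK => sJK; exact: subset_trans (joing_subr K Y) sJK.
Qed.

Lemma CD_contains (gT : finGroupType) (L K Y : {group gT}) :
  K \in CDlat L -> Y \subset L -> L \subset 'C(Y) -> Y \subset K.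
Proof.
rewrite inE => /andP[sKL /eqP mK] sYL cLY.
apply: contraT => nYK.
have sJL : K <*> Y \subset L by rewrite join_subG sKL.
move: (mstar_ub (K:=(K <*> Y)%G) sJL); rewrite mCD_join // -mK /mCD.
rewrite leqNgt ltn_pmul2r ?cardG_gt0 ?card_join_lt //.
Qed.

Lemma sHG (gT : finGroupType) (G H : {group gT}) : G :=: H * 'Z(G) -> H \subset G.
Proof. by move=> hG; rewrite hG mulG_subl. Qed.

Lemma cGZ (gT : finGroupType) (G : {group gT}) : G \subset 'C('Z(G)).
Proof. by rewrite centsC subsetIr. Qed.

Lemma joinZ (gT : finGroupType) (G X : {group gT}) :
  X \subset G -> X <*> 'Z(G) = X * 'Z(G).
Proof. by move=> sXG; apply: cent_joinEl; exact: subset_trans sXG (cGZ G). Qed.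

Lemma key (gT : finGroupType) (G H X : {group gT}) : G :=: H * 'Z(G) ->
  X \subset H -> H :&: 'Z(G) \subset X ->
  (mCD G (X <*> 'Z(G)) * #|H :&: 'Z(G)| * #|H :&: 'Z(G)|
   = mCD H X * #|'Z(G)| * #|'Z(G)|)%N.
Proof.
move=> hG sXH sWX.
have sXG : X \subset G := subset_trans sXH (sHG hG).
rewrite mCD_join ?cGZ //.
have cXZ : X \subset 'C('Z(G)) := subset_trans sXG (cGZ G).
have ha : (#|X <*> 'Z(G)| * #|H :&: 'Z(G)| = #|X| * #|'Z(G)|)%N.
  have eW : X :&: 'Z(G) = H :&: 'Z(G).
    apply/eqP; rewrite eqEsubset setSI //=.
    by apply/subsetIP; split => //; exact: subsetIr.
  by rewrite joinZ // mul_cardG eW.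
have hb : (#|'C_G(X)| * #|H :&: 'Z(G)| = #|'C_H(X)| * #|'Z(G)|)%N.
  have e1 : 'C_G(X) = ('C(X) :&: H) * 'Z(G).
    by rewrite group_modr -?hG 1?setIC // centsC.
  rewrite [H :&: 'C(X)]setIC (mul_cardG ('C(X) :&: H)%G 'Z(G)) /= -e1.
  have -> : 'C(X) :&: H :&: 'Z(G) = H :&: 'Z(G).
    rewrite -setIA; apply/setIidPr.
    by apply: subset_trans (subsetIr _ _) _; rewrite centsC.
  by [].

rewrite /mCD /=.
transitivity ((#|X <*> 'Z(G)| * #|H :&: 'Z(G)|) * (#|'C_G(X)| * #|H :&: 'Z(G)|))%N.
  by rewrite !mulnA; congr (_ * _)%N; rewrite mulnAC.
rewrite ha hb.
by rewrite !mulnA; congr (_ * _)%N; rewrite mulnAC.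
Qed.

Lemma CDH_W (gT : finGroupType) (G H X : {group gT}) : G :=: H * 'Z(G) ->
  X \in CDlat H -> H :&: 'Z(G) \subset X.
Proof.
move=> hG XCD; apply: (CD_contains (L:=H)) => //; first exact: subsetIl.
apply: subset_trans (sHG hG) _; apply: subset_trans (cGZ G) _.
by apply: centS; exact: subsetIr.
Qed.

Lemma CDG_Z (gT : finGroupType) (G K : {group gT}) :
  K \in CDlat G -> 'Z(G) \subset K.
Proof. by move=> KCD; apply: (CD_contains (L:=G)) => //; [exact: center_sub | exact: cGZ]. Qed.

Lemma decomp (gT : finGroupType) (G H K : {group gT}) : G :=: H * 'Z(G) ->
  K \subset G -> 'Z(G) \subset K -> (K :&: H) <*> 'Z(G) = K.
Proof.
move=> hG sKG sZK.
rewrite joinZ; last by apply: subset_trans sKG; exact: subsetIl.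
by rewrite group_modr // -hG; apply/setIidPl.
Qed.

Lemma recover (gT : finGroupType) (G H X : {group gT}) : G :=: H * 'Z(G) ->
  X \subset H -> H :&: 'Z(G) \subset X -> (X <*> 'Z(G)) :&: H = X.
Proof.
move=> hG sXH sWX.
rewrite joinZ; last exact: subset_trans sXH (sHG hG).
by rewrite -group_modl // setIC mulGSid.
Qed.

Lemma mstarE (gT : finGroupType) (G H : {group gT}) : G :=: H * 'Z(G) ->
  (mstarCD G * #|H :&: 'Z(G)| * #|H :&: 'Z(G)|
   = mstarCD H * #|'Z(G)| * #|'Z(G)|)%N.
Proof.
move=> hG; apply/eqP; rewrite eqn_leq; apply/andP; split.
  have [K sKG mK] := mstar_ex G.
  have KCD : K \in CDlat G by rewrite inE sKG mK eqxx.
  have sZK := CDG_Z KCD.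
  have sWX : H :&: 'Z(G) \subset K :&: H.
    by rewrite subsetI subsetIl andbT; apply: subset_trans sZK; exact: subsetIr.
  have := key hG (subsetIr K H) sWX.
  rewrite (decomp hG sKG sZK) mK => ->.
  by rewrite !leq_mul2r ?mstar_ub ?subsetIr ?orbT.
have [X sXH mX] := mstar_ex H.
have XCD : X \in CDlat H by rewrite inE sXH mX eqxx.
have sWX := CDH_W hG XCD.
rewrite -mX -(key hG sXH sWX) !leq_mul2r ?mstar_ub ?orbT //.
by rewrite join_subG center_sub (subset_trans sXH (sHG hG)).
Qed.

Lemma CDchar (gT : finGroupType) (G H K : {group gT}) : G :=: H * 'Z(G) ->
  K \in CDlat G <-> exists2 X : {group gT}, X \in CDlat H & K :=: X * 'Z(G).
Proof.
move=> hG; have E := mstarE hG; split.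
  move=> KCD; have := KCD; rewrite inE => /andP[sKG /eqP mK].
  have sZK := CDG_Z KCD.
  have sWX : H :&: 'Z(G) \subset K :&: H.
    by rewrite subsetI subsetIl andbT; apply: subset_trans sZK; exact: subsetIr.
  exists (K :&: H)%G; last first.
    by rewrite -joinZ ?(decomp hG sKG sZK) // (subset_trans (subsetIl _ _) sKG).
  rewrite inE subsetIr /=.
  have := key hG (subsetIr K H) sWX.
  rewrite (decomp hG sKG sZK) mK E => /eqP.
  by rewrite !eqn_pmul2r ?cardG_gt0 // eq_sym.
case=> X XCD hK; have := XCD; rewrite inE => /andP[sXH /eqP mX].
have sWX := CDH_W hG XCD.
have sXG := subset_trans sXH (sHG hG).
rewrite inE hK; apply/andP; split.
  by rewrite {2}hG mulSg.
have := key hG sXH sWX.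
rewrite mX -E joinZ // => /eqP.
by rewrite !eqn_pmul2r ?cardG_gt0.
Qed.

Theorem proposition3p5 (gT : finGroupType) (G H : {group gT}) :
  G :=: H * 'Z(G) ->
  (exists f : {group gT} -> {group gT},
      [/\ {in CDlat H &, injective f},
          f @: CDlat H = CDlat G,
          (forall X Y : {group gT}, X \in CDlat H -> Y \in CDlat H ->
             f (X :&: Y)%G :=: f X :&: f Y) &
          (forall X Y : {group gT}, X \in CDlat H -> Y \in CDlat H ->
             f (X <*> Y)%G :=: f X <*> f Y)])
  /\
  (forall K : {group gT},
      K \in CDlat G <-> exists2 X : {group gT}, X \in CDlat H & K :=: X * 'Z(G)).
Proof.
move=> hG; split; last by move=> K; exact: CDchar hG.
have sH := sHG hG.
exists (fun X => (X <*> 'Z(G))%G); split.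
- move=> X Y XCD YCD /= e.
  have := XCD; rewrite inE => /andP[sXH _].
  have := YCD; rewrite inE => /andP[sYH _].
  apply: val_inj => /=.
  rewrite -(recover hG sXH (CDH_W hG XCD)) -(recover hG sYH (CDH_W hG YCD)).
  by move/(congr1 val): e => /= ->.
- apply/setP => K; apply/imsetP/idP.
    case=> X XCD ->; apply/(CDchar _ hG); exists X => //=.
    by rewrite joinZ // (subset_trans _ sH) //; move: XCD; rewrite inE => /andP[].
  move=> /(CDchar _ hG) [X XCD hK]; exists X => //; apply: val_inj => /=.
  by rewrite joinZ ?hK // (subset_trans _ sH) //; move: XCD; rewrite inE => /andP[].
- move=> X Y XCD YCD /=.
  have := XCD; rewrite inE => /andP[sXH _].
  have := YCD; rewrite inE => /andP[sYH _].
  have sXG := subset_trans sXH sH.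
  have sYG := subset_trans sYH sH.
  have e : (X <*> 'Z(G)) :&: (Y <*> 'Z(G))
         = ((X <*> 'Z(G)) :&: (Y <*> 'Z(G)) :&: H) * 'Z(G).
    rewrite group_modr; last by rewrite subsetI !joing_subr.
    have sub : (X <*> 'Z(G)) :&: (Y <*> 'Z(G)) \subset G.
      by apply: subIset; rewrite join_subG sXG center_sub.
    rewrite -hG; exact: esym (elimT setIidPl sub).
  apply: (etrans _ (esym e)); rewrite setIIl (recover hG sXH (CDH_W hG XCD)) (recover hG sYH (CDH_W hG YCD)).
  by rewrite joinZ // subIset // sXG.
- move=> X Y _ _ /=.
  apply/eqP; rewrite eqEsubset; apply/andP; split.
    rewrite join_subG; apply/andP; split.
      rewrite join_subG; apply/andP; split.
        exact: subset_trans (joing_subl X 'Z(G)) (joing_subl _ _).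
      exact: subset_trans (joing_subl Y 'Z(G)) (joing_subr _ _).
    exact: subset_trans (joing_subr X 'Z(G)) (joing_subl _ _).
  rewrite join_subG; apply/andP; split; rewrite join_subG; apply/andP; split.
  - exact: subset_trans (joing_subl X Y) (joing_subl _ _).
  - exact: joing_subr.
  - exact: subset_trans (joing_subr X Y) (joing_subl _ _).
  - exact: joing_subr.
Qed.
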